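(* Let $p$ be an odd prime and let $L$ be a $\mathbb{Z}_p$-lattice of rank $k\ge 4$ with $L\simeq\langle \epsilon_1,p^{e_2}\epsilon_2,p^{e_3}\epsilon_3,\dots,p^{e_k}\epsilon_k\rangle$, where $0\le e_2\le e_3\le\cdots\le e_k$ and $\epsilon_i\in\mathbb{Z}_p^\times$. If $\nu_p(\langle\epsilon_1,p^{e_2}\epsilon_2,p^{e_3}\epsilon_3\rangle)<\infty$ (i.e., this ternary lattice is isotropic), then $\nu_p(L)\le \nu'_p(L)+1$.
   Context: $\langle a_1,\dots,a_k\rangle$ denotes the $\mathbb{Z}_p$-lattice with diagonal Gram matrix $\mathrm{diag}(a_1,\dots,a_k)$; $Q(\mathbf x)=B(\mathbf x,\mathbf x)$; $a$ is represented by $L$ if $a=Q(\mathbf x)$ for some $\mathbf x\in L$. For odd $p$, $SC_p=\{1,\Delta_p,p,p\Delta_p\}$ with $\Delta_p$ a non-square unit. For $L$ of rank $\ge4$ (or an isotropic ternary lattice) and $s\in SC_p$, let $u\ge0$ be least with $sp^{2u}$ represented by $L$; $\nu_{p,s}(L)=\mathrm{ord}_p(sp^{2u})$; $\nu_p(L)=\max_{s}\nu_{p,s}(L)$; $\nu'_p(L)=\max\{\nu_{p,s}(L): s\in SC_p\setminus\{s_0\}\}$ for any $s_0$ with $\nu_{p,s_0}(L)=\nu_p(L)$. For an anisotropic ternary $\mathbb{Z}_p$-lattice $K$ one sets $\nu_p(K)=\infty$. *)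

(* Defs.v *)
(* p-adic integers are modelled honestly as the inverse limit
   lim Z/p^n Z: a p-adic integer is a sequence x : nat -> int of approximations
   with x (n+1) = x n (mod p^n); two such sequences denote the same element of
   Z_p iff they agree mod p^n for every n. *)
From mathcomp Require Import all_boot all_order all_algebra.
Set Implicit Arguments. Unset Strict Implicit. Unset Printing Implicit Defensive.
Import Order.TTheory GRing.Theory Num.Theory.
Local Open Scope ring_scope.

Definition is_zp (p : nat) (x : nat -> int) : Prop :=
  forall n : nat, (x n.+1 == x n %[mod (p ^ n)%:Z])%Z.

Definition zp_eq (p : nat) (x y : nat -> int) : Prop :=
  forall n : nat, (x n == y n %[mod (p ^ n)%:Z])%Z.

Definition zp_of_int (a : int) : nat -> int := fun _ => a.

Definition zp_mul (x y : nat -> int) : nat -> int := fun n => x n * y n.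

Definition zp_unit (p : nat) (x : nat -> int) : Prop :=
  is_zp p x /\ ~~ (p%:Z %| x 1%N)%Z.

Definition zp_nonzero (p : nat) (x : nat -> int) : Prop :=
  exists n : nat, ~~ ((p ^ n)%:Z %| x n)%Z.

Definition zp_square (p : nat) (x : nat -> int) : Prop :=
  exists y : nat -> int, is_zp p y /\ zp_eq p (zp_mul y y) x.

Definition diag_Q (k : nat) (d x : nat -> nat -> int) : nat -> int :=
  fun n => \sum_(i < k) d i n * (x i n) ^+ 2.

Definition represents (p k : nat) (d : nat -> nat -> int) (a : nat -> int) : Prop :=
  exists x : nat -> nat -> int,
    (forall i, (i < k)%N -> is_zp p (x i)) /\ zp_eq p (diag_Q k d x) a.

Definition isotropic (p k : nat) (d : nat -> nat -> int) : Prop :=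
  exists x : nat -> nat -> int,
    (forall i, (i < k)%N -> is_zp p (x i)) /\
    (exists i, (i < k)%N /\ zp_nonzero p (x i)) /\
    zp_eq p (diag_Q k d x) (zp_of_int 0).

(* The square classes SC_p = {1, Delta, p, p Delta}, indexed by 'I_4 *)
Definition sc_val (p : nat) (Delta : nat -> int) (s : 'I_4) : nat -> int :=
  match val s with
  | 0 => zp_of_int 1
  | 1 => Delta
  | 2 => zp_of_int p%:Z
  | _ => zp_mul (zp_of_int p%:Z) Delta
  end.

Definition sc_ord (s : 'I_4) : nat := if (2 <= val s)%N then 1 else 0.

(* nu_{p,s}(L) = v : with u least such that s p^(2u) is represented by L,
   v = ord_p(s p^(2u)) = ord_p(s) + 2u *)
Definition nu_s_spec (p k : nat) (d : nat -> nat -> int) (Delta : nat -> int)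
    (s : 'I_4) (v : nat) : Prop :=
  exists u : nat,
    v = (sc_ord s + 2 * u)%N /\
    represents p k d (zp_mul (sc_val p Delta s) (zp_of_int (p ^ (2 * u))%:Z)) /\
    (forall u' : nat, (u' < u)%N ->
       ~ represents p k d (zp_mul (sc_val p Delta s) (zp_of_int (p ^ (2 * u'))%:Z))).

Definition diag_entries (p : nat) (e : nat -> nat) (eps : nat -> nat -> int)
  : nat -> nat -> int :=
  fun i => zp_mul (zp_of_int (p ^ e i)%:Z) (eps i).

(* Main.v *)
Require Import Defs.
From mathcomp Require Import all_boot all_order all_algebra.
From mathcomp Require Import ring zify.
Import Order.TTheory GRing.Theory Num.Theory.
Set Implicit Arguments. Unset Strict Implicit. Unset Printing Implicit Defensive.
Local Open Scope ring_scope.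

Lemma pz_exp (p n : nat) : ((p ^ n)%N)%:Z = (p%:Z) ^+ n.
Proof. elim: n => [|n IH]; first by rewrite expn0 expr0. by rewrite expnS PoszM IH exprS. Qed.

Lemma zp_eqP p x y : zp_eq p x y <-> forall n, ((p%:Z ^+ n) %| x n - y n)%Z.
Proof. by split=> h n; have := h n; rewrite eqz_mod_dvd pz_exp. Qed.

Lemma is_zpP p x : is_zp p x <-> forall n, ((p%:Z ^+ n) %| x n.+1 - x n)%Z.
Proof. by split=> h n; have := h n; rewrite eqz_mod_dvd pz_exp. Qed.

Lemma dvd_exp_le (p : int) m n a : (m <= n)%N -> (p ^+ n %| a)%Z -> (p ^+ m %| a)%Z.
Proof. move=> h; apply: dvdz_trans; exact: dvdz_exp2l. Qed.

Lemma zp_chain p x : is_zp p x -> forall m n, (m <= n)%N -> ((p%:Z ^+ m) %| x n - x m)%Z.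
Proof.
move=> /is_zpP hx m; elim=> [|n IH] hmn.
  by rewrite leqn0 in hmn; move/eqP: hmn => ->; rewrite subrr dvdz0.
rewrite leq_eqVlt in hmn; case/orP: hmn => [/eqP->|hmn]; first by rewrite subrr dvdz0.
have -> : x n.+1 - x m = (x n.+1 - x n) + (x n - x m) by ring.
apply: rpredD; last exact: IH.
exact: dvd_exp_le (hx n).
Qed.

Lemma zp_addc p x y : is_zp p x -> is_zp p y -> is_zp p (fun n => x n + y n).
Proof.
move=> /is_zpP hx /is_zpP hy; apply/is_zpP => n.
have -> : x n.+1 + y n.+1 - (x n + y n) = (x n.+1 - x n) + (y n.+1 - y n) by ring.
exact: rpredD.
Qed.

Lemma zp_mulc p x y : is_zp p x -> is_zp p y -> is_zp p (fun n => x n * y n).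
Proof.
move=> /is_zpP hx /is_zpP hy; apply/is_zpP => n.
have -> : x n.+1 * y n.+1 - (x n * y n) = x n.+1 * (y n.+1 - y n) + (x n.+1 - x n) * y n by ring.
by apply: rpredD; [apply: dvdz_mull | apply: dvdz_mulr].
Qed.

Lemma zp_const p (a : int) : is_zp p (fun _ => a).
Proof. by apply/is_zpP => n; rewrite subrr dvdz0. Qed.

Lemma zp_oppc p x : is_zp p x -> is_zp p (fun n => - x n).
Proof.
move=> /is_zpP hx; apply/is_zpP => n.
have -> : - x n.+1 - - x n = - (x n.+1 - x n) by ring.
by rewrite rpredN.
Qed.

Lemma zp_sumc p k (F : 'I_k -> nat -> int) :
  (forall i, is_zp p (F i)) -> is_zp p (fun n => \sum_(i < k) F i n).
Proof.
move=> h; apply/is_zpP => n; rewrite -sumrB; apply: rpred_sum => i _.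
by have /is_zpP := h i; apply.
Qed.

Lemma zEuclid (p : nat) (x y : int) : prime p -> (p%:Z %| x * y)%Z = (p%:Z %| x)%Z || (p%:Z %| y)%Z.
Proof. by move=> hp; rewrite !dvdzE abszM /= Euclid_dvdM. Qed.

Lemma zcoprime (p : nat) n (x : int) : prime p -> ~~ (p%:Z %| x)%Z -> coprimez (p%:Z ^+ n) x.
Proof.
move=> hp hx; apply: coprimezXl.
by rewrite coprimezE /= prime_coprime // -dvdzE.
Qed.

Lemma unit_ndvd p x n : zp_unit p x -> (0 < n)%N -> ~~ (p%:Z %| x n)%Z.
Proof.
case=> hx h1 hn; apply/negP => hd; move/negP: h1; apply.
have := zp_chain hx hn; rewrite expr1 => hc.
have -> : x 1%N = x n - (x n - x 1%N) by ring.
exact: rpredB.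
Qed.

Lemma dvdD (d a b : int) : (d %| a)%Z -> (d %| b)%Z -> (d %| a + b)%Z.
Proof. exact: rpredD. Qed.
Lemma dvdB (d a b : int) : (d %| a)%Z -> (d %| b)%Z -> (d %| a - b)%Z.
Proof. exact: rpredB. Qed.
Lemma coprime_unit p x n : prime p -> zp_unit p x -> coprimez (p%:Z ^+ n) (x n).
Proof.
move=> hp hu; case: n => [|n]; first by rewrite expr0 /coprimez gcd1z.
exact: zcoprime (unit_ndvd hu _).
Qed.

Lemma zp_inv p x : prime p -> zp_unit p x ->
  exists y, is_zp p y /\ forall n, ((p%:Z ^+ n) %| x n * y n - 1)%Z.
Proof.
move=> hp hu.
pose y n := projT1 (Bezoutz (x n) (p%:Z ^+ n)).
have hy : forall n, ((p%:Z ^+ n) %| x n * y n - 1)%Z.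
  move=> n; rewrite /y; case: (Bezoutz _ _) => u [v /= huv].
  have := coprime_unit n hp hu; rewrite coprimez_sym /coprimez => /eqP hg.
  rewrite hg in huv.
  have -> : x n * u - 1 = - (v * p%:Z ^+ n) by rewrite -huv; ring.
  by rewrite rpredN dvdz_mull // dvdzz.
exists y; split=> //; apply/is_zpP => n.
case: n => [|n]; first by rewrite expr0 dvd1z.
rewrite -(Gauss_dvdzr _ (coprime_unit n.+1 hp hu)).
have hx := (is_zpP p x).1 hu.1 n.+1.
have -> : x n.+1 * (y n.+2 - y n.+1) =
   (x n.+2 * y n.+2 - 1) - (x n.+2 - x n.+1) * y n.+2 - (x n.+1 * y n.+1 - 1) by ring.
apply: rpredB; last exact: hy.
apply: rpredB; last exact: dvdz_mulr.
exact: dvd_exp_le (hy n.+2).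
Qed.
Lemma p_ndvd2 p : prime p -> odd p -> ~~ (p%:Z %| 2)%Z.
Proof.
move=> hp ho; rewrite dvdzE /=; apply/negP => /(dvdn_leq (isT : (0 < 2)%N)) h.
have h2 := prime_gt1 hp.
have e : p = 2%N by apply/eqP; rewrite eqn_leq h h2.
by rewrite e in ho.
Qed.

Lemma ndvd_sq (p : nat) (y : int) : prime p -> ~~ (p%:Z %| y)%Z -> ~~ (p%:Z %| y ^+ 2)%Z.
Proof. by move=> hp h; rewrite expr2 zEuclid // negb_or h. Qed.

Lemma hensel p c r : prime p -> odd p -> zp_unit p c ->
  ((p%:Z) %| c 1%N - r ^+ 2)%Z -> zp_square p c.
Proof.
move=> hp ho hu hr.
set P := p%:Z.
pose w (y : int) := projT1 (Bezoutz (2 * y) P).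
pose step n y := y + ((c n.+1 - y ^+ 2) %/ P ^+ n)%Z * w y * P ^+ n.
pose fix ys (m : nat) : int := match m with 0%N => r | m'.+1 => step m (ys m') end.
have hw : forall y, ~~ (P %| y)%Z -> (P %| 2 * y * w y - 1)%Z.
  move=> y hy; rewrite /w; case: (Bezoutz _ _) => u [v /= huv].
  have hc : coprimez (2 * y) P.
    rewrite coprimez_sym; have := zcoprime 1 hp; rewrite expr1; apply.
    by rewrite zEuclid // negb_or p_ndvd2.
  move: hc; rewrite /coprimez => /eqP hg; rewrite hg in huv.
  have -> : 2 * y * u - 1 = (u * (2 * y) + v * P) - 1 - v * P by ring.
  by rewrite huv subrr sub0r rpredN dvdz_mull // dvdzz.
have inv : forall m, ~~ (P %| ys m)%Z /\ (P ^+ m.+1 %| ys m ^+ 2 - c m.+1)%Z.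
  elim=> [|m [IH1 IH2]].
    split.
      2: by rewrite expr1 (_ : r ^+ 2 - c 1%N = - (c 1%N - r ^+ 2)); [rewrite rpredN | ring].
    apply/negP => hd; have := unit_ndvd hu (isT : (0 < 1)%N); rewrite -/P => /negP; apply.
    have -> : c 1%N = (c 1%N - r ^+ 2) + r ^+ 2 by ring.
    by apply: rpredD => //; rewrite expr2 dvdz_mulr.
  have hcc := (is_zpP p c).1 hu.1 m.+1.
  set y := ys m in IH1 IH2 *.
  have hq : (P ^+ m.+1 %| c m.+2 - y ^+ 2)%Z.
    have -> : c m.+2 - y ^+ 2 = (c m.+2 - c m.+1) - (y ^+ 2 - c m.+1) by ring.
    exact: rpredB.
  have /= -> : ys m.+1 = step m.+1 y by [].
  rewrite /step; set q := ((c m.+2 - y ^+ 2) %/ P ^+ m.+1)%Z.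
  have hq2 : c m.+2 - y ^+ 2 = q * P ^+ m.+1 by rewrite divzK.
  have := hw y IH1; case/dvdzP => v hv.
  split.
    apply/negP => hd; move/negP: IH1; apply.
    have -> : y = (y + q * w y * P ^+ m.+1) - q * w y * P ^+ m.+1 by ring.
    by apply: rpredB => //; apply: dvdz_mull; rewrite exprS; apply: dvdz_mulr; exact: dvdzz.
  have -> : (y + q * w y * P ^+ m.+1) ^+ 2 - c m.+2 =
     q * P ^+ m.+1 * (2 * y * w y - 1) + q ^+ 2 * w y ^+ 2 * (P ^+ m.+1 * P ^+ m.+1)
     - (c m.+2 - y ^+ 2 - q * P ^+ m.+1) by ring.
  rewrite hq2 subrr subr0 hv; apply: rpredD.
    rewrite (_ : q * P ^+ m.+1 * (v * P) = (q * v) * P ^+ m.+2); last by rewrite [P ^+ m.+2]exprSr; ring.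
    by apply: dvdz_mull; exact: dvdzz.
  apply: dvdz_mull; rewrite [P ^+ m.+2]exprSr; apply: dvdz_mul; first exact: dvdzz.
  by rewrite exprS; apply: dvdz_mulr; exact: dvdzz.
exists (fun n => ys n.-1); split.
  apply/is_zpP => -[|n]; first by rewrite expr0 dvd1z.
  by rewrite /= /step addrAC subrr add0r; apply: dvdz_mull; exact: dvdzz.
apply/zp_eqP => -[|n]; first by rewrite expr0 dvd1z.
by rewrite /zp_mul /= -expr2; case: (inv n).
Qed.
Definition sig_of (Delta : nat -> int) (s : 'I_4) : nat -> int :=
  if odd (val s) then Delta else zp_of_int 1.

Lemma sc_val_eq p Delta (s : 'I_4) u n :
  sc_val p Delta s n * ((p ^ (2 * u))%N)%:Z = p%:Z ^+ (sc_ord s + 2 * u) * sig_of Delta s n.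
Proof.
rewrite pz_exp exprD /sig_of /sc_val /sc_ord /zp_mul /zp_of_int.
by case: s => [[|[|[|[|m]]]] hs] //=; rewrite ?expr0 ?expr1; ring.
Qed.

Lemma zp_sig p Delta s : zp_unit p Delta -> is_zp p (sig_of Delta s).
Proof. by move=> hD; rewrite /sig_of; case: ifP => _; [exact: hD.1 | exact: zp_const]. Qed.

Lemma sum_expand k (D Z : nat -> int) (cc q : int) i0 : (i0 < k)%N ->
  \sum_(i < k) D i * (cc * Z i + (if (i : nat) == i0 then q else 0)) ^+ 2 =
  cc ^+ 2 * (\sum_(i < k) D i * Z i ^+ 2) + D i0 * (2 * cc * Z i0 * q + q ^+ 2).
Proof.
move=> hi.
rewrite (bigD1 (Ordinal hi)) //= eqxx [in RHS](bigD1 (Ordinal hi)) //= mulrDr.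
have -> : \sum_(i < k | i != Ordinal hi) D i * (cc * Z i + (if (i : nat) == i0 then q else 0)) ^+ 2
        = \sum_(i < k | i != Ordinal hi) cc ^+ 2 * (D i * Z i ^+ 2).
  apply: eq_bigr => i hne.
  have -> : ((i : nat) == i0) = false.
    apply/negbTE; move: hne; apply: contra => /eqP h; apply/eqP; exact: val_inj.
  by rewrite addr0; ring.
by rewrite -mulr_sumr; ring.
Qed.

Lemma unit_mul p x y : prime p -> zp_unit p x -> zp_unit p y -> zp_unit p (fun n => x n * y n).
Proof.
move=> hp hx hy; split; first exact: zp_mulc hx.1 hy.1.
by rewrite zEuclid // negb_or hx.2 hy.2.
Qed.

Lemma unit_const p (a : int) : ~~ (p%:Z %| a)%Z -> zp_unit p (fun _ => a).
Proof. by move=> h; split => //; exact: zp_const. Qed.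

Lemma constr p k e eps Delta (s0 : 'I_4) u (z : nat -> nat -> int) i0 :
  prime p -> odd p -> zp_unit p Delta ->
  (forall i, (i < k)%N -> zp_unit p (eps i)) ->
  (forall i, (i < k)%N -> is_zp p (z i)) ->
  zp_eq p (diag_Q k (diag_entries p e eps) z) (zp_of_int 0) ->
  (i0 < k)%N -> zp_unit p (z i0) -> (e i0 <= sc_ord s0 + 2 * u)%N ->
  represents p k (diag_entries p e eps)
    (zp_mul (sc_val p Delta s0) (zp_of_int (p ^ (2 * u))%:Z)).
Proof.
move=> hp ho hD heps hz hQ hi0 hzu hle.
set T := (sc_ord s0 + 2 * u)%N.
set j := (T - e i0)%N.
set P := p%:Z.
pose sg := sig_of Delta s0.
have hsg : is_zp p sg := zp_sig s0 hD.
pose g n := 2 * eps i0 n * z i0 n.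
have hg : zp_unit p g.
  apply: (unit_mul (x := fun n => 2 * eps i0 n)) => //.
  apply: (unit_mul (x := fun _ => 2)) => //; last exact: heps.
  exact: unit_const (p_ndvd2 hp ho).
have [h [hh hgh]] := zp_inv hp hg.
pose c n := (sg n - P ^+ j * eps i0 n) * h n.
have hc : is_zp p c.
  apply: (zp_mulc (x := fun n => sg n - P ^+ j * eps i0 n)) => //.
  apply: zp_addc => //; apply: zp_oppc.
  exact: (zp_mulc (x := fun _ => P ^+ j) (zp_const _ _) (heps _ hi0).1).
exists (fun i n => c n * z i n + (if i == i0 then P ^+ j else 0)); split.
  move=> i hi; apply: (zp_addc (x := fun n => c n * z i n)); last exact: zp_const.
  exact: zp_mulc hc (hz _ hi).
apply/zp_eqP => n; move/zp_eqP: hQ => /(_ n).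
rewrite /diag_Q /diag_entries /zp_mul /zp_of_int sc_val_eq -/T -/P subr0.
rewrite (sum_expand (fun i => (p ^ e i)%:Z * eps i n) (fun i => z i n)) // pz_exp -/P.
have eT : P ^+ T = P ^+ e i0 * P ^+ j by rewrite -exprD subnKC.
set Qz := \sum_(i < k) _.
move=> hQz.
have -> : c n ^+ 2 * Qz + P ^+ e i0 * eps i0 n * (2 * c n * z i0 n * P ^+ j + P ^+ j ^+ 2)
   - P ^+ T * sg n = c n ^+ 2 * Qz + P ^+ T * ((sg n - P ^+ j * eps i0 n) * (g n * h n - 1)).
  by rewrite eT /c /g; ring.
apply: rpredD; first exact: dvdz_mull.
by apply: dvdz_mull; apply: dvdz_mull.
Qed.
Lemma cong_mul (d a a' b b' : int) : (d %| a - a')%Z -> (d %| b - b')%Z -> (d %| a * b - a' * b')%Z.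
Proof.
move=> h1 h2; have -> : a * b - a' * b' = a * (b - b') + (a - a') * b' by ring.
by apply: rpredD; [apply: dvdz_mull | apply: dvdz_mulr].
Qed.

Lemma sum_trunc k m (F : nat -> int) : (m <= k)%N -> (forall i, (m <= i)%N -> F i = 0) ->
  \sum_(i < k) F i = \sum_(i < m) F i.
Proof.
move=> hmk hF; rewrite -(subnKC hmk) big_split_ord /= [X in _ + X]big1 ?addr0 // => i _.
by apply: hF; rewrite leq_addr.
Qed.

Lemma pneq0 p : prime p -> p%:Z != 0.
Proof. by move=> hp; rewrite eqz_nat; case: p hp. Qed.

Lemma expneq0 p n : prime p -> p%:Z ^+ n != 0.
Proof. by move=> hp; rewrite expf_neq0 // pneq0. Qed.

Lemma find_mu (Pm : nat -> bool) : Pm 0%N -> forall n, ~~ Pm n -> exists m, Pm m /\ ~~ Pm m.+1.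
Proof.
move=> h0; elim=> [|n IH] hn; first by rewrite h0 in hn.
case hP: (Pm n); first by exists n; rewrite hP.
by apply: IH; rewrite hP.
Qed.

Lemma prim p k e eps x : prime p -> (3 <= k)%N ->
  (forall i, (i < k)%N -> is_zp p (eps i)) ->
  (forall i, (i < 3)%N -> is_zp p (x i)) ->
  (exists i, (i < 3)%N /\ zp_nonzero p (x i)) ->
  zp_eq p (diag_Q 3 (diag_entries p e eps) x) (zp_of_int 0) ->
  exists z i0, (forall i, (i < k)%N -> is_zp p (z i)) /\
     zp_eq p (diag_Q k (diag_entries p e eps) z) (zp_of_int 0) /\
     (i0 < 3)%N /\ zp_unit p (z i0).
Proof.
move=> hp hk heps hx [i1 [hi1 [n1 hn1]]] hQ.
set P := p%:Z.
pose Pm m := all (fun i => (P ^+ m %| x i m)%Z) (iota 0 3).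
have [mu [hmu hmu1]] : exists m, Pm m /\ ~~ Pm m.+1.
  apply: (@find_mu Pm _ n1).
    by apply/allP => i _; rewrite expr0 dvd1z.
  apply/negP => /allP /(_ i1); rewrite mem_iota /= add0n hi1 -/P -pz_exp => /(_ isT) h.
  by rewrite h in hn1.
have hdiv : forall i, (i < 3)%N -> forall n, (P ^+ mu %| x i (n + mu)%N)%Z.
  move=> i hi n; move/allP: hmu => /(_ i); rewrite mem_iota /= add0n hi => /(_ isT) h.
  have -> : x i (n + mu)%N = (x i (n + mu)%N - x i mu) + x i mu by ring.
  by apply: dvdD => //; apply: (zp_chain (hx _ hi)); rewrite leq_addl.
pose z i n := if (i < 3)%N then (x i (n + mu)%N %/ P ^+ mu)%Z else 0.
have hzx : forall i, (i < 3)%N -> forall n, x i (n + mu)%N = z i n * P ^+ mu.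
  by move=> i hi n; rewrite /z hi divzK //; apply: hdiv.
have hz : forall i, is_zp p (z i).
  move=> i; case hi: (i < 3)%N; last by rewrite /z hi; exact: zp_const.
  apply/is_zpP => n.
  rewrite -(dvdz_mul2r (expneq0 mu hp)) mulrBl -!hzx // -exprD addSn.
  exact: (is_zpP p (x i)).1 (hx _ hi) (n + mu)%N.
exists z.
have [i0 [hi0 hn0]] : exists i0, (i0 < 3)%N /\ ~~ (P ^+ mu.+1 %| x i0 mu.+1)%Z.
  move/allPn: hmu1 => [i]; rewrite mem_iota /= add0n => hi hn.
  by exists i.
exists i0; split; first by move=> i _; exact: hz.
split; last first.
  split=> //; split; first exact: hz.
  apply/negP => hd; move/negP: hn0; apply.
  have := hzx _ hi0 1%N; rewrite add1n => ->.
  by rewrite exprS; apply: dvdz_mul hd (dvdzz _).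
apply/zp_eqP => n; rewrite subr0 /diag_Q.
rewrite (@sum_trunc k 3 (fun i => diag_entries p e eps i n * z i n ^+ 2)) //; last first.
  by move=> i hi; rewrite /z ltnNge hi /= expr2 !mulr0.
move/zp_eqP: hQ => /(_ (n + 2 * mu)%N); rewrite subr0 /diag_Q.
have -> : \sum_(i < 3) diag_entries p e eps i (n + 2 * mu)%N * x i (n + 2 * mu)%N ^+ 2
  = P ^+ (2 * mu) * \sum_(i < 3) diag_entries p e eps i (n + 2 * mu)%N * z i (n + mu)%N ^+ 2.
  rewrite mulr_sumr; apply: eq_bigr => i _.
  rewrite (_ : (n + 2 * mu)%N = ((n + mu) + mu)%N); last by rewrite mul2n -addnn addnA.
  rewrite hzx // mul2n -addnn exprD; ring.
rewrite exprD mulrC dvdz_mul2r ?expneq0 // => h.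
have -> : \sum_(i < 3) diag_entries p e eps i n * z i n ^+ 2 =
  \sum_(i < 3) diag_entries p e eps i (n + 2 * mu)%N * z i (n + mu)%N ^+ 2 -
  \sum_(i < 3) (diag_entries p e eps i (n + 2 * mu)%N * z i (n + mu)%N ^+ 2
                - diag_entries p e eps i n * z i n ^+ 2).
  by rewrite sumrB; ring.
apply: dvdB => //; apply: rpred_sum => i _.
have hi3 : (i < k)%N by apply: leq_trans hk; exact: ltn_ord.
have hd : is_zp p (diag_entries p e eps i).
  exact: (zp_mulc (x := fun _ => _) (zp_const _ _) (heps _ hi3)).
apply: cong_mul; first by apply: (zp_chain hd); rewrite leq_addr.
rewrite !expr2; apply: cong_mul; apply: (zp_chain (hz i)); rewrite leq_addr //.
Qed.
Lemma dvd_P_exp (P : int) n : (0 < n)%N -> (P %| P ^+ n)%Z.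
Proof. by case: n => // n _; rewrite exprS dvdz_mulr // dvdzz. Qed.

Lemma exp2 (P : int) a : P ^+ (2 * a) = P ^+ a * P ^+ a.
Proof. by rewrite mul2n -addnn exprD. Qed.

Lemma lead p (ell r K : nat) (Z W C : int) : prime p -> (r < K)%N -> ~~ (p%:Z %| C)%Z ->
  Z = p%:Z ^+ ell * W -> (p%:Z ^+ K %| Z - p%:Z ^+ r * C)%Z ->
  (ell <= r)%N /\ (ell = r -> (p%:Z %| W - C)%Z) /\ ((ell < r)%N -> (p%:Z %| W)%Z).
Proof.
move=> hp hrK hC hZ hK.
set P := p%:Z in hC hZ hK *.
have hr1 : (P ^+ r.+1 %| Z - P ^+ r * C)%Z by exact: (dvd_exp_le hrK hK).
case: (ltngtP ell r) => hl.
- split=> //; split; first by move=> e; rewrite e ltnn in hl.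
  move=> _.
  have h1 : (P ^+ ell.+1 %| Z)%Z.
    have -> : Z = (Z - P ^+ r * C) + P ^+ r * C by ring.
    apply: dvdD; first exact: (dvd_exp_le (leqW hl) hr1).
    by apply: dvdz_mulr; apply: dvdz_exp2l.
  by move: h1; rewrite hZ exprSr dvdz_mul2l ?expneq0.
- exfalso; move/negP: hC; apply.
  have h1 : (P ^+ r.+1 %| Z)%Z by rewrite hZ; apply: dvdz_mulr; apply: dvdz_exp2l.
  have : (P ^+ r.+1 %| P ^+ r * C)%Z.
    have -> : P ^+ r * C = Z - (Z - P ^+ r * C) by ring.
    exact: dvdB.
  by rewrite exprSr dvdz_mul2l ?expneq0.
- split => //; split => // _; move: hr1; rewrite hZ hl -mulrBr exprSr dvdz_mul2l ?expneq0 //.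
Qed.

Lemma lead_nd p (ell r K : nat) (Z W C : int) : prime p -> (r < K)%N -> ~~ (p%:Z %| C)%Z ->
  ~~ (p%:Z %| W)%Z ->
  Z = p%:Z ^+ ell * W -> (p%:Z ^+ K %| Z - p%:Z ^+ r * C)%Z ->
  ell = r /\ (p%:Z %| W - C)%Z.
Proof.
move=> hp hrK hC hW hZ hK; have [h1 [h2 h3]] := lead hp hrK hC hZ hK.
have e : ell = r.
  apply/eqP; rewrite eqn_leq h1 /=; rewrite leqNgt; apply/negP => hlt.
  by rewrite (h3 hlt) in hW.
by split=> //; exact: h2.
Qed.

Lemma zero_case p (r K : nat) (Z V C : int) : prime p -> (r < K)%N -> ~~ (p%:Z %| C)%Z ->
  Z = p%:Z ^+ K * V -> (p%:Z ^+ K %| Z - p%:Z ^+ r * C)%Z -> False.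
Proof.
move=> hp hrK hC hZ hK; have [h1 _] := lead hp hrK hC hZ hK.
by rewrite leqNgt hrK in h1.
Qed.

Lemma one_case p (ell r K : nat) (Z W V C : int) : prime p -> (r < K)%N -> ~~ (p%:Z %| C)%Z ->
  ~~ (p%:Z %| W)%Z ->
  Z = p%:Z ^+ ell * W + p%:Z ^+ K * V -> (p%:Z ^+ K %| Z - p%:Z ^+ r * C)%Z ->
  ell = r /\ (p%:Z %| W - C)%Z.
Proof.
move=> hp hrK hC hW hZ hK.
set P := p%:Z in hC hW hZ hK *.
case: (ltnP ell K) => hl.
  have eZ : Z = P ^+ ell * (W + P ^+ (K - ell) * V) by rewrite hZ mulrDr mulrA -exprD (subnKC (ltnW hl)).
  have hd : (P %| P ^+ (K - ell) * V)%Z.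
    by apply: dvdz_mulr; apply: dvd_P_exp; rewrite subn_gt0.
  have hW' : ~~ (P %| W + P ^+ (K - ell) * V)%Z.
    apply/negP => h; move/negP: hW; apply.
    have -> : W = (W + P ^+ (K - ell) * V) - P ^+ (K - ell) * V by ring.
    exact: dvdB.
  have [e1 e2] := lead_nd hp hrK hC hW' eZ hK; split => //.
  have -> : W - C = (W + P ^+ (K - ell) * V - C) - P ^+ (K - ell) * V by ring.
  exact: dvdB.
exfalso; apply: (@zero_case p r K Z (P ^+ (ell - K) * W + V) C hp hrK hC _ hK).
by rewrite hZ mulrDr mulrA -exprD subnKC.
Qed.

Lemma two_case p (l1 l2 r K : nat) (Z W1 W2 C : int) : prime p -> (r < K)%N -> ~~ (p%:Z %| C)%Z ->
  ~~ (p%:Z %| W1)%Z -> ~~ (p%:Z %| W2)%Z ->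
  Z = p%:Z ^+ l1 * W1 + p%:Z ^+ l2 * W2 -> (p%:Z ^+ K %| Z - p%:Z ^+ r * C)%Z ->
  [\/ (l1 < l2)%N /\ l1 = r /\ (p%:Z %| W1 - C)%Z,
      (l2 < l1)%N /\ l2 = r /\ (p%:Z %| W2 - C)%Z |
      l1 = l2 /\ ((l1 = r /\ ~~ (p%:Z %| W1 + W2)%Z) \/ ((l1 < r)%N /\ (p%:Z %| W1 + W2)%Z))].
Proof.
move=> hp hrK hC hW1 hW2 hZ hK.
set P := p%:Z in hC hW1 hW2 hZ hK *.
case: (ltngtP l1 l2) => hl.
- have eZ : Z = P ^+ l1 * (W1 + P ^+ (l2 - l1) * W2) by rewrite hZ mulrDr mulrA -exprD (subnKC (ltnW hl)).
  have hd : (P %| P ^+ (l2 - l1) * W2)%Z.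
    by apply: dvdz_mulr; apply: dvd_P_exp; rewrite subn_gt0.
  have hW' : ~~ (P %| W1 + P ^+ (l2 - l1) * W2)%Z.
    apply/negP => h; move/negP: hW1; apply.
    have -> : W1 = (W1 + P ^+ (l2 - l1) * W2) - P ^+ (l2 - l1) * W2 by ring.
    exact: dvdB.
  have [e1 e2] := lead_nd hp hrK hC hW' eZ hK.
  apply: Or31; split=> //; split => //.
  have -> : W1 - C = (W1 + P ^+ (l2 - l1) * W2 - C) - P ^+ (l2 - l1) * W2 by ring.
  exact: dvdB.
- have eZ : Z = P ^+ l2 * (W2 + P ^+ (l1 - l2) * W1) by rewrite hZ mulrDr mulrA -exprD (subnKC (ltnW hl)); ring.
  have hd : (P %| P ^+ (l1 - l2) * W1)%Z.
    by apply: dvdz_mulr; apply: dvd_P_exp; rewrite subn_gt0.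
  have hW' : ~~ (P %| W2 + P ^+ (l1 - l2) * W1)%Z.
    apply/negP => h; move/negP: hW2; apply.
    have -> : W2 = (W2 + P ^+ (l1 - l2) * W1) - P ^+ (l1 - l2) * W1 by ring.
    exact: dvdB.
  have [e1 e2] := lead_nd hp hrK hC hW' eZ hK.
  apply: Or32; split=> //; split => //.
  have -> : W2 - C = (W2 + P ^+ (l1 - l2) * W1 - C) - P ^+ (l1 - l2) * W1 by ring.
  exact: dvdB.
- apply: Or33; split => //.
  have eZ : Z = P ^+ l1 * (W1 + W2) by rewrite hZ hl mulrDr.
  have [h1 [h2 h3]] := lead hp hrK hC eZ hK.
  case hs: (P %| W1 + W2)%Z.
    right; split => //; rewrite ltn_neqAle h1 andbT; apply/eqP => e.
    move/negP: hC; apply; have hh := h2 e.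
    have -> : C = (W1 + W2) - (W1 + W2 - C) by ring.
    exact: dvdB.
  left; split => //; apply/eqP; rewrite eqn_leq h1 leqNgt; apply/negP => hlt.
  by rewrite h3 in hs.
Qed.
Lemma vdec (P : int) K (x : int) : (P ^+ K %| x)%Z \/
  exists al X', (al < K)%N /\ ~~ (P %| X')%Z /\ x = P ^+ al * X'.
Proof.
elim: K => [|K [IH|[al [X' [h1 [h2 h3]]]]]].
- by left; rewrite expr0 dvd1z.
- case/dvdzP: IH => q hq.
  case hqP: (P %| q)%Z.
    by left; rewrite hq exprSr mulrC; apply: dvdz_mul => //; rewrite dvdzz.
  by right; exists K, q; rewrite hqP hq mulrC.
- by right; exists al, X'; split => //; exact: leqW.
Qed.

Lemma odd2 a : odd (2 * a) = false.
Proof. by rewrite mul2n odd_double. Qed.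

Lemma odd2D E b : odd (E + 2 * b) = odd E.
Proof. by rewrite oddD odd2 addbF. Qed.

Lemma anal p T E r (a b X Y C : int) : prime p -> (r <= T)%N ->
  ~~ (p%:Z %| a)%Z -> ~~ (p%:Z %| b)%Z -> ~~ (p%:Z %| C)%Z ->
  (p%:Z ^+ T.+1 %| a * X ^+ 2 + p%:Z ^+ E * b * Y ^+ 2 - p%:Z ^+ r * C)%Z ->
  [\/ ~~ odd r /\ (exists X', ~~ (p%:Z %| X')%Z /\ (p%:Z %| C - a * X' ^+ 2)%Z),
      odd r = odd E /\ (exists Y', ~~ (p%:Z %| Y')%Z /\ (p%:Z %| C - b * Y' ^+ 2)%Z),
      ~~ odd r /\ ~~ odd E |
      ~~ odd E /\ (E <= T)%N /\ (exists X' Y', ~~ (p%:Z %| X')%Z /\ ~~ (p%:Z %| Y')%Z /\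
          (p%:Z %| a * X' ^+ 2 + b * Y' ^+ 2)%Z)].
Proof.
move=> hp hrT ha hb hC hK.
have hrK : (r < T.+1)%N by [].
set P := p%:Z in ha hb hC hK *.
have flip : forall u v : int, (P %| u - v)%Z -> (P %| v - u)%Z.
  by move=> u v h; rewrite -opprB rpredN.
have nd : forall c x : int, ~~ (P %| c)%Z -> ~~ (P %| x)%Z -> ~~ (P %| c * x ^+ 2)%Z.
  by move=> c x h1 h2; rewrite zEuclid // negb_or h1 ndvd_sq.
case: (vdec P T.+1 X) => [hX|[al [X' [hal [hX' eX]]]]];
case: (vdec P T.+1 Y) => [hY|[be [Y' [hbe [hY' eY]]]]].
- case/dvdzP: hX => q eX; case/dvdzP: hY => q' eY.
  exfalso; apply: (@zero_case p r T.+1 _ (a * q ^+ 2 * P ^+ T.+1 + P ^+ E * b * q' ^+ 2 * P ^+ T.+1) C hp hrK hC _ hK).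
  by rewrite eX eY; ring.
- case/dvdzP: hX => q eX.
  have eZ : a * X ^+ 2 + P ^+ E * b * Y ^+ 2 = P ^+ (E + 2 * be) * (b * Y' ^+ 2) + P ^+ T.+1 * (a * q ^+ 2 * P ^+ T.+1).
    by rewrite eX eY exprD exp2; ring.
  have [e1 e2] := one_case hp hrK hC (nd _ _ hb hY') eZ hK.
  apply: Or42; split; first by rewrite -e1 odd2D.
  by exists Y'; split => //; apply: flip.
- case/dvdzP: hY => q eY.
  have eZ : a * X ^+ 2 + P ^+ E * b * Y ^+ 2 = P ^+ (2 * al) * (a * X' ^+ 2) + P ^+ T.+1 * (P ^+ E * b * q ^+ 2 * P ^+ T.+1).
    by rewrite eX eY exp2; ring.
  have [e1 e2] := one_case hp hrK hC (nd _ _ ha hX') eZ hK.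
  apply: Or41; split; first by rewrite -e1 odd2.
  by exists X'; split => //; apply: flip.
- have eZ : a * X ^+ 2 + P ^+ E * b * Y ^+ 2 = P ^+ (2 * al) * (a * X' ^+ 2) + P ^+ (E + 2 * be) * (b * Y' ^+ 2).
    by rewrite eX eY exprD !exp2; ring.
  case: (two_case hp hrK hC (nd _ _ ha hX') (nd _ _ hb hY') eZ hK).
  + move=> [_ [e1 e2]]; apply: Or41; split; first by rewrite -e1 odd2.
    by exists X'; split => //; apply: flip.
  + move=> [_ [e1 e2]]; apply: Or42; split; first by rewrite -e1 odd2D.
    by exists Y'; split => //; apply: flip.
  + move=> [el [[e1 _]|[lt1 hs]]].
    * apply: Or43; split; first by rewrite -e1 odd2.
      by rewrite -(odd2D E be) -el odd2.
    * apply: Or44; split; first by rewrite -(odd2D E be) -el odd2.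
      split; first by apply: leq_trans hrT; apply: leq_trans (ltnW lt1); rewrite el leq_addr.
      by exists X', Y'.
Qed.
Lemma nonsq p Delta n (t : int) : prime p -> odd p -> zp_unit p Delta -> ~ zp_square p Delta ->
  (0 < n)%N -> ~ (p%:Z %| Delta n - t ^+ 2)%Z.
Proof.
move=> hp ho hD hns hn hd; apply: hns; apply: (hensel (r := t)) => //.
have h := zp_chain hD.1 hn; rewrite expr1 in h.
have -> : Delta 1%N - t ^+ 2 = (Delta n - t ^+ 2) - (Delta n - Delta 1%N) by ring.
exact: dvdB.
Qed.

Lemma p_ndvd1 p : prime p -> ~~ (p%:Z %| 1)%Z.
Proof. by move=> hp; rewrite dvdzE /= Euclid_dvd1. Qed.

Lemma sum2 k (F : nat -> int) : (2 <= k)%N -> (forall i, (2 <= i)%N -> F i = 0) ->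
  \sum_(i < k) F i = F 0%N + F 1%N.
Proof.
move=> hk hF; rewrite (@sum_trunc k 2 F) //.
by rewrite !big_ord_recl big_ord0 addr0.
Qed.

Lemma hyper p k e eps Delta (s0 : 'I_4) u n (X' Y' : int) :
  prime p -> odd p -> (2 <= k)%N -> zp_unit p Delta ->
  (forall i, (i < k)%N -> zp_unit p (eps i)) -> e 0%N = 0%N -> ~~ odd (e 1%N) ->
  (e 1%N <= sc_ord s0 + 2 * u)%N -> (0 < n)%N ->
  ~~ (p%:Z %| X')%Z -> ~~ (p%:Z %| Y')%Z -> (p%:Z %| eps 0%N n * X' ^+ 2 + eps 1%N n * Y' ^+ 2)%Z ->
  represents p k (diag_entries p e eps)
    (zp_mul (sc_val p Delta s0) (zp_of_int (p ^ (2 * u))%:Z)).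
Proof.
move=> hp ho hk hD heps e0 hE hle hn hX hY hS.
set P := p%:Z in hX hY hS *.
have he0 := heps 0%N (ltnW hk).
have he1 := heps 1%N hk.
have [h [hh hinv]] := zp_inv hp he0.
have [yv [_ hyv]] := zp_inv hp (unit_const hY).
set y1 := yv 1%N.
have hy1 : (P %| Y' * y1 - 1)%Z by have := hyv 1%N; rewrite expr1.
have hi1 : (P %| eps 0%N 1%N * h 1%N - 1)%Z by have := hinv 1%N; rewrite expr1.
pose c m := - eps 1%N m * h m.
have hcu : zp_unit p c.
  split; first by apply: (zp_mulc (x := fun m => - eps 1%N m)) => //; apply: zp_oppc; exact: he1.1.
  rewrite /c zEuclid // negb_or rpredN he1.2 /=.
  apply/negP => hd; move/negP: (p_ndvd1 hp); apply.
  have := dvdB (dvdz_mull (eps 0%N 1%N) hd) hi1.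
  rewrite (_ : eps 0%N 1%N * h 1%N - (eps 0%N 1%N * h 1%N - 1) = 1); last by ring.
  by move=> h2; exact: h2.
have hS1 : (P %| eps 0%N 1%N * X' ^+ 2 + eps 1%N 1%N * Y' ^+ 2)%Z.
  have h0 := zp_chain he0.1 hn; have h1 := zp_chain he1.1 hn; rewrite expr1 in h0 h1.
  have -> : eps 0%N 1%N * X' ^+ 2 + eps 1%N 1%N * Y' ^+ 2 =
    (eps 0%N n * X' ^+ 2 + eps 1%N n * Y' ^+ 2) - (eps 0%N n - eps 0%N 1%N) * X' ^+ 2
    - (eps 1%N n - eps 1%N 1%N) * Y' ^+ 2 by ring.
  by apply: dvdB; [apply: dvdB => //|]; apply: dvdz_mulr.
have hc1 : (P %| c 1%N - (X' * y1) ^+ 2)%Z.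
  have -> : c 1%N - (X' * y1) ^+ 2 =
     - h 1%N * y1 ^+ 2 * (eps 0%N 1%N * X' ^+ 2 + eps 1%N 1%N * Y' ^+ 2)
     + eps 1%N 1%N * h 1%N * ((Y' * y1 - 1) * (1 + Y' * y1))
     + X' ^+ 2 * y1 ^+ 2 * (eps 0%N 1%N * h 1%N - 1) by rewrite /c; ring.
  apply: dvdD; [apply: dvdD|]; [exact: dvdz_mull | |exact: dvdz_mull].
  by apply: dvdz_mull; apply: dvdz_mulr.
have [lam [hlam hlc]] := hensel hp ho hcu hc1.
move/zp_eqP: hlc => hlc.
set E := e 1%N.
have eE : E = (2 * E./2)%N by rewrite -[LHS]odd_double_half (negbTE hE) add0n mul2n.
pose z i m := if i == 0%N then P ^+ (E./2) * lam m else if i == 1%N then 1 else 0.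
apply: (@constr p k e eps Delta s0 u z 1%N) => //.
- move=> i _; rewrite /z; case: (i == 0%N).
    exact: (zp_mulc (x := fun _ => P ^+ E./2) (zp_const _ _) hlam).
  by case: (i == 1%N); exact: zp_const.
- apply/zp_eqP => m; rewrite subr0 /diag_Q.
  rewrite (@sum2 k (fun i => diag_entries p e eps i m * z i m ^+ 2)) //; last first.
    by move=> i hi; rewrite /z; case: i hi => [|[|i]] //= _; rewrite expr2 !mulr0.
  rewrite /z /= /diag_entries /zp_mul /zp_of_int e0 expn0 !pz_exp -/P -/E.
  have -> : 1 * eps 0%N m * (P ^+ E./2 * lam m) ^+ 2 + P ^+ E * eps 1%N m * 1 ^+ 2
     = P ^+ E * (eps 0%N m * (lam m * lam m - c m) - eps 1%N m * (eps 0%N m * h m - 1)).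
    have eP : P ^+ E = P ^+ E./2 * P ^+ E./2 by rewrite {1}eE exp2.
    by rewrite eP /c; ring.
  apply: dvdz_mull; apply: dvdB; apply: dvdz_mull; [exact: hlc | exact: hinv].
- exact: unit_const (p_ndvd1 hp).
Qed.

Lemma rep_scale p k d a u u' : (u <= u')%N ->
  represents p k d (zp_mul a (zp_of_int (p ^ (2 * u))%:Z)) ->
  represents p k d (zp_mul a (zp_of_int (p ^ (2 * u'))%:Z)).
Proof.
move=> hu [x [hx hq]].
set P := p%:Z.
exists (fun i n => P ^+ (u' - u) * x i n); split.
  by move=> i hi; apply: (zp_mulc (x := fun _ => _)) (zp_const _ _) (hx _ hi).
move/zp_eqP: hq => hq; apply/zp_eqP => n.
rewrite /diag_Q /zp_mul /zp_of_int !pz_exp -/P.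
have -> : (2 * u' = 2 * (u' - u) + 2 * u)%N by rewrite -mulnDr subnK.
have -> : \sum_(i < k) d i n * (P ^+ (u' - u) * x i n) ^+ 2 =
   P ^+ (2 * (u' - u)) * \sum_(i < k) d i n * x i n ^+ 2.
  by rewrite mulr_sumr; apply: eq_bigr => i _; rewrite exp2; ring.
have := hq n; rewrite /diag_Q /zp_mul /zp_of_int pz_exp -/P => h.
have -> : P ^+ (2 * (u' - u)) * (\sum_(i < k) d i n * x i n ^+ 2) - a n * P ^+ (2 * (u' - u) + 2 * u)
  = P ^+ (2 * (u' - u)) * (\sum_(i < k) d i n * x i n ^+ 2 - a n * P ^+ (2 * u)) by rewrite exprD; ring.
exact: dvdz_mull.
Qed.
Lemma sum_split2 k (F : nat -> int) : (2 <= k)%N ->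
  \sum_(i < k) F i = F 0%N + F 1%N + \sum_(i < k - 2) F (2 + i)%N.
Proof.
move=> hk; rewrite -(subnKC hk) big_split_ord /= addKn.
by rewrite !big_ord_recl big_ord0 addr0.
Qed.

Lemma extract p k e eps Delta T (s : 'I_4) u : (2 <= k)%N -> e 0%N = 0%N ->
  (forall i, (2 <= i)%N -> (i < k)%N -> (T < e i)%N) ->
  represents p k (diag_entries p e eps) (zp_mul (sc_val p Delta s) (zp_of_int (p ^ (2 * u))%:Z)) ->
  exists X Y, (p%:Z ^+ T.+1 %| eps 0%N T.+1 * X ^+ 2 + p%:Z ^+ e 1%N * eps 1%N T.+1 * Y ^+ 2
       - p%:Z ^+ (sc_ord s + 2 * u) * sig_of Delta s T.+1)%Z.
Proof.
move=> hk he0 hbig [x [_ hq]].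
exists (x 0%N T.+1), (x 1%N T.+1).
move/zp_eqP: hq => /(_ T.+1).
rewrite /diag_Q /zp_mul /zp_of_int sc_val_eq.
rewrite (@sum_split2 k (fun i => diag_entries p e eps i T.+1 * x i T.+1 ^+ 2)) //.
rewrite /diag_entries /zp_mul /zp_of_int he0 expn0 mul1r pz_exp => h.
set R := \sum_(i < k - 2) _ in h.
have hR : (p%:Z ^+ T.+1 %| R)%Z.
  apply: rpred_sum => i _; rewrite pz_exp; apply: dvdz_mulr; apply: dvdz_mulr.
  apply: dvdz_exp2l; apply: hbig; first exact: leq_addr.
  by rewrite -ltn_subRL; exact: ltn_ord.
have -> : eps 0%N T.+1 * x 0%N T.+1 ^+ 2 + p%:Z ^+ e 1%N * eps 1%N T.+1 * x 1%N T.+1 ^+ 2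
   - p%:Z ^+ (sc_ord s + 2 * u) * sig_of Delta s T.+1 =
   (eps 0%N T.+1 * x 0%N T.+1 ^+ 2 + p%:Z ^+ e 1%N * eps 1%N T.+1 * x 1%N T.+1 ^+ 2 + R
   - p%:Z ^+ (sc_ord s + 2 * u) * sig_of Delta s T.+1) - R by ring.
exact: dvdB.
Qed.

Lemma sc_ord_le1 (s : 'I_4) : (sc_ord s <= 1)%N.
Proof. by rewrite /sc_ord; case: ifP. Qed.

Lemma sig_ndvd p Delta (s : 'I_4) n : prime p -> zp_unit p Delta -> (0 < n)%N ->
  ~~ (p%:Z %| sig_of Delta s n)%Z.
Proof.
move=> hp hD hn; rewrite /sig_of; case: ifP => _; first exact: unit_ndvd.
exact: p_ndvd1.
Qed.

Lemma classes (s0 : 'I_4) : exists sp so1 so2 : 'I_4,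
  [/\ sp != s0, so1 != s0, so2 != s0, sc_ord sp = sc_ord s0 &
   [/\ (sc_ord so1 + sc_ord s0 = 1)%N, (sc_ord so2 + sc_ord s0 = 1)%N, ~~ odd (val so1) & odd (val so2)]].
Proof.
case: s0 => [[|[|[|[|m]]]] hs] //.
- by exists (Ordinal (isT : (1 < 4)%N)), (Ordinal (isT : (2 < 4)%N)), (Ordinal (isT : (3 < 4)%N)).
- by exists (Ordinal (isT : (0 < 4)%N)), (Ordinal (isT : (2 < 4)%N)), (Ordinal (isT : (3 < 4)%N)).
- by exists (Ordinal (isT : (3 < 4)%N)), (Ordinal (isT : (0 < 4)%N)), (Ordinal (isT : (1 < 4)%N)).
- by exists (Ordinal (isT : (2 < 4)%N)), (Ordinal (isT : (0 < 4)%N)), (Ordinal (isT : (1 < 4)%N)).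
Qed.
Definition O4p (p T E : nat) (a b : int) : Prop :=
  ~~ odd E /\ (E <= T)%N /\ (exists X' Y', ~~ (p%:Z %| X')%Z /\ ~~ (p%:Z %| Y')%Z /\
          (p%:Z %| a * X' ^+ 2 + b * Y' ^+ 2)%Z).

Lemma sqc (P c D X1 X2 : int) : (P %| 1 - c * X1 ^+ 2)%Z -> (P %| D - c * X2 ^+ 2)%Z ->
  (P %| D - (c * X1 * X2) ^+ 2)%Z.
Proof.
move=> h1 h2.
have -> : D - (c * X1 * X2) ^+ 2 = (D - c * X2 ^+ 2) + c * X2 ^+ 2 * (1 - c * X1 ^+ 2) by ring.
by apply: dvdD => //; apply: dvdz_mull.
Qed.

Lemma combine p T E (a b D C3 : int) : (0 < T)%N ->
  (forall t, ~ (p%:Z %| D - t ^+ 2)%Z) ->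
  [\/ ~~ odd T /\ (exists X', ~~ (p%:Z %| X')%Z /\ (p%:Z %| C3 - a * X' ^+ 2)%Z),
      odd T = odd E /\ (exists Y', ~~ (p%:Z %| Y')%Z /\ (p%:Z %| C3 - b * Y' ^+ 2)%Z),
      ~~ odd T /\ ~~ odd E | O4p p T E a b] ->
  [\/ ~~ odd T.-1 /\ (exists X', ~~ (p%:Z %| X')%Z /\ (p%:Z %| 1 - a * X' ^+ 2)%Z),
      odd T.-1 = odd E /\ (exists Y', ~~ (p%:Z %| Y')%Z /\ (p%:Z %| 1 - b * Y' ^+ 2)%Z),
      ~~ odd T.-1 /\ ~~ odd E | O4p p T E a b] ->
  [\/ ~~ odd T.-1 /\ (exists X', ~~ (p%:Z %| X')%Z /\ (p%:Z %| D - a * X' ^+ 2)%Z),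
      odd T.-1 = odd E /\ (exists Y', ~~ (p%:Z %| Y')%Z /\ (p%:Z %| D - b * Y' ^+ 2)%Z),
      ~~ odd T.-1 /\ ~~ odd E | O4p p T E a b] ->
  O4p p T E a b.
Proof.
move=> hT hD A3 A1 A2.
have parT : odd T = ~~ odd T.-1 by rewrite -{1}(prednK hT).
case: A3 => [[h3 _]|[h3 _]|[h3 _]|//];
case: A1 => [[h1 [X1 [hX1 c1]]]|[h1 [Y1 [hY1 c1]]]|[h1 h1']|//];
case: A2 => [[h2 [X2 [hX2 c2]]]|[h2 [Y2 [hY2 c2]]]|[h2 h2']|//];
first [ by exfalso; apply: (hD (a * X1 * X2)); exact: sqc c1 c2
      | by exfalso; apply: (hD (b * Y1 * Y2)); exact: sqc c1 c2
      | by exfalso; move: parT h3 h1 h2 h1' h2' => /=; case: (odd T.-1); case: (odd E); case: (odd T)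
      | by exfalso; move: parT h3 h1 h2 h1' => /=; case: (odd T.-1); case: (odd E); case: (odd T)
      | by exfalso; move: parT h3 h1 h2 h2' => /=; case: (odd T.-1); case: (odd E); case: (odd T)
      | by exfalso; move: parT h3 h1 h2 => /=; case: (odd T.-1); case: (odd E); case: (odd T) ].
Qed.
Theorem lemma2p6 (p k : nat) (Delta : nat -> int) (e : nat -> nat)
    (eps : nat -> nat -> int) (nu : 'I_4 -> nat) :
  prime p -> odd p -> (4 <= k)%N ->
  zp_unit p Delta -> ~ zp_square p Delta ->
  (forall i, (i < k)%N -> zp_unit p (eps i)) ->
  e 0%N = 0%N ->
  (forall i j, (i <= j)%N -> (j < k)%N -> (e i <= e j)%N) ->
  (forall s : 'I_4, nu_s_spec p k (diag_entries p e eps) Delta s (nu s)) ->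
  isotropic p 3 (diag_entries p e eps) ->
  forall s0 : 'I_4, (forall s : 'I_4, (nu s <= nu s0)%N) ->
    (nu s0 <= (\max_(s < 4 | s != s0) nu s) + 1)%N.
Proof.
move=> hp ho hk hD hns heps he0 hmono hnu hiso s0 hmax.
set M := \max_(s < 4 | s != s0) nu s.
have hM : forall s, s != s0 -> (nu s <= M)%N.
  by move=> s hs; exact: (leq_bigmax_cond (P := fun s => s != s0) (F := nu) s hs).
rewrite leqNgt; apply/negP => hlt.
have [sp [so1 [so2 [hsp hso1 hso2 esp [eo1 eo2 hodd1 hodd2]]]]] := classes s0.
have [u0 [hN [_ hmin]]] := hnu s0.
have ho1 := sc_ord_le1 s0.
have [u1 [hn1 [hr1 _]]] := hnu so1.
have [u2 [hn2 [hr2 _]]] := hnu so2.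
have [u3 [hn3 [hr3 _]]] := hnu sp.
have b1 := hM _ hso1; have b2 := hM _ hso2; have b3 := hM _ hsp.
set o := sc_ord s0 in ho1 hN esp eo1 eo2.
set T := (o + 2 * u0.-1)%N.
have hu0 : (0 < u0)%N by lia.
have k2 : (2 <= k)%N by lia.
have k3 : (3 <= k)%N by lia.
apply: (hmin u0.-1); first by lia.
have [x [hx3 [hnz hQ3]]] := hiso.
have [z [i0 [hz [hQz [hi0 hzu]]]]] := prim hp k3 (fun i hi => (heps i hi).1) hx3 hnz hQ3.
have hi0k : (i0 < k)%N by lia.
case: (leqP (e i0) T) => hT.
  exact: (constr hp ho hD heps hz hQz hi0k hzu hT).
have hbig : forall i, (2 <= i)%N -> (i < k)%N -> (T < e i)%N.
  move=> i h2 hik; apply: (leq_trans hT); apply: hmono => //; lia.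
set w := (u0 + o - 2)%N.
have hw1 : (u1 <= w)%N by lia.
have hw2 : (u2 <= w)%N by lia.
have hw3 : (u3 <= u0.-1)%N by lia.
have er1 : (sc_ord so1 + 2 * w = T.-1)%N by lia.
have er2 : (sc_ord so2 + 2 * w = T.-1)%N by lia.
have er3 : (sc_ord sp + 2 * u0.-1 = T)%N by lia.
have hT1 : (0 < T)%N by lia.
have [X1 [Y1 h1]] := extract k2 he0 hbig (rep_scale hw1 hr1).
have [X2 [Y2 h2]] := extract k2 he0 hbig (rep_scale hw2 hr2).
have [X3 [Y3 h3]] := extract k2 he0 hbig (rep_scale hw3 hr3).
have ha : ~~ (p%:Z %| eps 0%N T.+1)%Z by apply: unit_ndvd; [apply: heps; lia|].
have hb : ~~ (p%:Z %| eps 1%N T.+1)%Z by apply: unit_ndvd; [apply: heps; lia|].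
rewrite er1 in h1; rewrite er2 in h2; rewrite er3 in h3.
have A1 := anal (T := T) hp (leq_pred T) ha hb (sig_ndvd so1 hp hD (isT : (0 < T.+1)%N)) h1.
have A2 := anal (T := T) hp (leq_pred T) ha hb (sig_ndvd so2 hp hD (isT : (0 < T.+1)%N)) h2.
have A3 := anal (T := T) hp (leqnn T) ha hb (sig_ndvd sp hp hD (isT : (0 < T.+1)%N)) h3.
have es1 : sig_of Delta so1 T.+1 = 1 by rewrite /sig_of (negbTE hodd1).
have es2 : sig_of Delta so2 T.+1 = Delta T.+1 by rewrite /sig_of hodd2.
rewrite es1 in A1; rewrite es2 in A2.
have hsq := nonsq (n := T.+1) hp ho hD hns isT.
have [hE [hEl [X' [Y' [hX [hY hS]]]]]] := combine hT1 hsq A3 A1 A2.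
exact: (hyper hp ho k2 hD heps he0 hE hEl (isT : (0 < T.+1)%N) hX hY hS).
Qed.
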